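(* For $n\ge 1$, the number $t_n(321)$ of shallow $321$-avoiding permutations in $S_n$ equals $F_{2n-1}$.
   Context: For $\pi\in S_n$: $D(\pi)=\sum_{i}|\pi_i-i|$, $I(\pi)$ is the number of inversions, $T(\pi)=n-\mathrm{cyc}(\pi)$ with $\mathrm{cyc}$ the number of cycles in the disjoint cycle decomposition; $\pi$ is shallow if $I(\pi)+T(\pi)=D(\pi)$. A permutation avoids a pattern $\sigma$ if it has no subsequence order-isomorphic to $\sigma$. $F_m$ are the Fibonacci numbers with $F_1=F_2=1$. *)

(* Defs.v *)
From mathcomp Require Import all_boot all_order all_fingroup.
Set Implicit Arguments. Unset Strict Implicit. Unset Printing Implicit Defensive.

(* Permutations of S_n are modelled as 's : 'S_n' acting on 'I_n = {0,...,n-1}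
   (0-based positions; |pi_i - i| is unaffected by the shift). *)

Definition disp n (s : 'S_n) : nat :=
  \sum_(i < n) (if (s i <= i)%N then (i - s i)%N else (s i - i)%N).

Definition inv n (s : 'S_n) : nat :=
  #|[set p : 'I_n * 'I_n | (p.1 < p.2)%N && (s p.2 < s p.1)%N]|.

(* number of cycles (fixed points count as cycles) *)
Definition ncycles n (s : 'S_n) : nat := #|porbits s|.

Definition tdepth n (s : 'S_n) : nat := (n - ncycles s)%N.

Definition shallow n (s : 'S_n) : bool := (inv s + tdepth s)%N == disp s.

Definition contains n k (s : 'S_n) (sigma : 'S_k) : bool :=
  [exists f : {ffun 'I_k -> 'I_n},
    [forall a : 'I_k, forall b : 'I_k,
       ((a < b)%N ==> (f a < f b)%N) &&
       ((s (f a) < s (f b))%N == (sigma a < sigma b)%N)]].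

Definition avoids n k (s : 'S_n) (sigma : 'S_k) : bool := ~~ contains s sigma.

(* the pattern 321, i.e. 0-based [2;1;0] : the reversal permutation of 'I_3 *)
Definition p321 : 'S_3 := perm (@rev_ord_inj 3).

Fixpoint fib (m : nat) : nat :=
  match m with
  | 0 => 0
  | 1 => 1
  | (S ((S m'') as m')) => fib m' + fib m''
  end.

(* Main.v *)
From Pilot Require Import Defs.
From mathcomp Require Import all_boot all_order all_fingroup.
From mathcomp Require Import zify.
Import Pilot.Defs.
Set Implicit Arguments. Unset Strict Implicit. Unset Printing Implicit Defensive.

Definition ins n (s : 'S_n) (x : 'I_n.+1) : 'S_n.+1 :=
  tperm x ord_max * lift_perm ord_max ord_max s.

Notation wd := (widen_ord (leqnSn _)).

Lemma wd_lift n (i : 'I_n) : wd i = lift ord_max i.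
Proof. by apply: val_inj; rewrite [RHS]lift_max. Qed.

Lemma wd_neq_max n (i : 'I_n) : (wd i == ord_max) = false.
Proof. by apply/negbTE; rewrite -val_eqE /= neq_ltn ltn_ord. Qed.

Lemma wd_inj n : injective (widen_ord (leqnSn n)).
Proof. by move=> i j /(congr1 val) /= /val_inj. Qed.

Lemma ins_max_wd n (s : 'S_n) i : (ins s ord_max (wd i) : nat) = s i.
Proof. by rewrite /ins tperm1 mul1g wd_lift lift_perm_lift lift_max. Qed.

Lemma ins_max_max n (s : 'S_n) : ins s ord_max ord_max = ord_max.
Proof. by rewrite /ins tperm1 mul1g lift_perm_id. Qed.

Lemma ins_wd_wd n (s : 'S_n) k i :
  (ins s (wd k) (wd i) : nat) = if i == k then n else s i.
Proof.
rewrite /ins permM; case: eqP => [->|/eqP ne].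
  by rewrite tpermL lift_perm_id.
rewrite tpermD; first by rewrite wd_lift lift_perm_lift lift_max.
  by rewrite (inj_eq (@wd_inj n)) eq_sym.
by rewrite eq_sym wd_neq_max.
Qed.

Lemma ins_wd_max n (s : 'S_n) k : (ins s (wd k) ord_max : nat) = s k.
Proof. by rewrite /ins permM tpermR wd_lift lift_perm_lift lift_max. Qed.

Lemma ins_x n (s : 'S_n) x : ins s x x = ord_max.
Proof. by rewrite /ins permM tpermL lift_perm_id. Qed.

Lemma ins_inj n : injective (fun p : 'S_n * 'I_n.+1 => ins p.1 p.2).
Proof.
move=> [s x] [t y] /= E.
have exy : x = y.
  by apply: (@perm_inj _ (ins s x)); rewrite ins_x E ins_x.
subst y; congr pair.
move: E; rewrite /ins => /mulgI E; apply/permP => i.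
have := congr1 (fun p : 'S_n.+1 => p (lift ord_max i)) E.
by rewrite !lift_perm_lift => /lift_inj.
Qed.

Lemma ins_bij n : bijective (fun p : 'S_n * 'I_n.+1 => ins p.1 p.2).
Proof.
apply: inj_card_bij; first exact: ins_inj.
by rewrite card_prod !card_Sn card_ord factS mulnC.
Qed.

Lemma sum_ins n (F : 'S_n.+1 -> nat) :
  \sum_(p : 'S_n.+1) F p = \sum_(s : 'S_n) \sum_(x : 'I_n.+1) F (ins s x).
Proof.
rewrite (reindex (fun p : 'S_n * 'I_n.+1 => ins p.1 p.2)) /=.
  by rewrite pair_big.
by apply: onW_bij; exact: ins_bij.
Qed.

Lemma iter_lift n (s : 'S_n) i k :
  iter i (lift_perm ord_max ord_max s) (lift ord_max k) = lift ord_max (iter i s k).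
Proof. by elim: i => //= i ->; rewrite lift_perm_lift. Qed.

Lemma porbit_lift n (s : 'S_n) k :
  porbit (lift_perm ord_max ord_max s) (lift ord_max k) = lift ord_max @: porbit s k.
Proof.
apply/setP => y; apply/porbitP/imsetP.
  by case=> i ->; exists ((s ^+ i)%g k); rewrite ?mem_porbit // !permX iter_lift.
by case=> z /porbitP [i ->] ->; exists i; rewrite !permX iter_lift.
Qed.

Lemma porbit_lift_max n (s : 'S_n) :
  porbit (lift_perm ord_max ord_max s) ord_max = [set ord_max].
Proof.
apply/setP => y; rewrite inE; apply/porbitP/eqP.
  by case=> i ->; rewrite permX_fix // lift_perm_id.
by move=> ->; exists 0; rewrite expg0 perm1.
Qed.

Lemma imset_T (T rT : finType) (f : T -> rT) : f @: T = f @: [set: T].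
Proof. by apply/setP => y; apply/imsetP/imsetP => [] [x _ ->]; exists x. Qed.

Lemma ncycles_ins_max n (s : 'S_n) : ncycles (ins s ord_max) = (ncycles s).+1.
Proof.
rewrite /ncycles /ins tperm1 mul1g /porbits !imset_T.
have -> : [set: 'I_n.+1] = ord_max |: [set lift ord_max k | k : 'I_n].
  apply/setP => z; rewrite !inE; case: (unliftP ord_max z) => [k ->|->].
    by rewrite imset_f ?orbT.
  by rewrite eqxx.
rewrite imsetU1 -imset_comp porbit_lift_max.
have -> : [set (porbit (lift_perm ord_max ord_max s) \o lift ord_max) x | x : 'I_n]
   = (fun P : {set 'I_n} => lift ord_max @: P) @: (porbit s @: [set: 'I_n]).
  rewrite -imset_comp imset_T; apply: eq_imset => k /=; exact: porbit_lift.
rewrite cardsU1 (card_imset _ (imset_inj (@lift_inj n.+1 ord_max))).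
suff N : [set ord_max] \notin (fun P : {set 'I_n} => lift ord_max @: P) @: (porbit s @: [set: 'I_n]) by rewrite N.
apply/imsetP => [[P _] /setP /(_ ord_max)].
rewrite inE eqxx => /esym /imsetP [k _] E; by move: (neq_lift ord_max k); rewrite -E eqxx.
Qed.

Lemma ncycles_ins_wd n (s : 'S_n) k : ncycles (ins s (wd k)) = ncycles s.
Proof.
have := porbits_mul_tperm (lift_perm ord_max ord_max s) (wd k) ord_max.
rewrite porbit_lift_max inE wd_neq_max /=.
have := ncycles_ins_max s; rewrite /ncycles /ins tperm1 mul1g => ->.
move=> H; apply/eqP; rewrite -(eqn_add2r 2) H; lia.
Qed.

Lemma ncycles_le n (s : 'S_n) : ncycles s <= n.
Proof. by rewrite /ncycles /porbits (leq_trans (leq_imset_card _ _)) // card_ord. Qed.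

Definition E n (s : 'S_n) (k : 'I_n) := \sum_(j < n) ((k < j) && (s k < s j)).

Lemma invE n (s : 'S_n) :
  inv s = \sum_(i < n) \sum_(j < n) ((i < j) && (s j < s i)).
Proof.
rewrite /inv -sum1dep_card big_mkcond pair_big /=.
by apply: eq_bigr => p _; case: ifP.
Qed.

Lemma inv_split n (p : 'S_n.+1) : inv p =
  \sum_(i < n) \sum_(j < n) ((i < j) && (p (wd j) < p (wd i)))
  + \sum_(i < n) (p ord_max < p (wd i)).
Proof.
rewrite invE big_ord_recr /= [X in _ + X]big1 ?addn0; last first.
  by move=> j _; rewrite ltnNge -ltnS ltn_ord.
rewrite -big_split; apply: eq_bigr => i _; rewrite big_ord_recr /= ltn_ord //.
Qed.

Lemma dsplit n (v : 'I_n -> nat) (k : 'I_n) :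
  \sum_(i < n) \sum_(j < n) ((i < j) && (v j < v i)) =
  \sum_(j < n) ((k < j) && (v j < v k)) + \sum_(i < n) ((i < k) && (v k < v i)) +
  \sum_(i < n | i != k) \sum_(j < n | j != k) ((i < j) && (v j < v i)).
Proof.
rewrite (bigD1 k) //= -addnA; congr (_ + _).
rewrite [X in X + _](bigD1 k) //= ltnn add0n -big_split /=.
by apply: eq_bigr => i _; rewrite (bigD1 k).
Qed.

Lemma sum_lt n (k : 'I_n) : \sum_(j < n) (k < j) = n - k.+1.
Proof.
case: k => k /= Hk; elim: n Hk => // n IH Hk.
rewrite big_ord_recr /=; case: (ltnP k n) => H.
  rewrite IH //; lia.
have -> : k = n by lia.
rewrite big1; first by rewrite subnn.
by move=> j _; rewrite ltnNge (ltnW (ltn_ord j)).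
Qed.

Lemma inv_ins_max n (s : 'S_n) : inv (ins s ord_max) = inv s.
Proof.
rewrite inv_split invE [X in _ + X]big1 ?addn0; last first.
  by move=> i _; rewrite ins_max_max ins_max_wd ltnNge ltnW.
by apply: eq_bigr => i _; apply: eq_bigr => j _; rewrite !ins_max_wd.
Qed.

Lemma inv_ins_wd n (s : 'S_n) k : inv (ins s (wd k)) = inv s + 1 + 2 * E s k.
Proof.
rewrite inv_split.
under eq_bigr do under eq_bigr do rewrite !ins_wd_wd.
under [X in _ + X]eq_bigr do rewrite ins_wd_wd ins_wd_max.
rewrite (dsplit (fun i => if i == k then n else s i) k) invE (dsplit (fun i => nat_of_ord (s i)) k).
cbv beta; rewrite eqxx.
have -> : \sum_(i < n | i != k) \sum_(j < n | j != k)
   ((i < j) && ((if j == k then n else s j) < (if i == k then n else s i))) =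
   \sum_(i < n | i != k) \sum_(j < n | j != k) ((i < j) && (s j < s i)).
  by apply: eq_bigr => i /negbTE ->; apply: eq_bigr => j /negbTE ->.
have -> : \sum_(i < n) ((i < k) && (n < (if i == k then n else s i))) = 0.
  rewrite big1 // => i _; case: eqP => _; rewrite ?ltnn ?andbF //.
  by rewrite [n < _]ltnNge (ltnW (ltn_ord (s i))) andbF.
have -> : \sum_(j < n) ((k < j) && ((if j == k then n else s j) < n)) =
   \sum_(j < n) ((k < j) && (s j < s k)) + E s k.
  rewrite /E -big_split /=; apply: eq_bigr => j _.
  case: eqP => [->|/eqP ne]; first by rewrite ltnn.
  have : (s j : nat) != s k by rewrite (inj_eq val_inj) (inj_eq perm_inj).
  have := ltn_ord (s j); case: (k < j) => //=; lia.
have -> : \sum_(i < n) (s k < (if i == k then n else s i)) =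
   \sum_(i < n) ((i < k) && (s k < s i)) + E s k + 1.
  have -> : 1 = \sum_(i < n) (i == k).
    by rewrite (bigD1 k) // (eqxx k) big1 // => i /andP[_ /negbTE ->].
  rewrite /E -!big_split; apply: eq_bigr => i _.
  case: (eqVneq i k) => [->|ne]; first by rewrite ltnn ?eqxx ltn_ord.
  rewrite ?(negbTE ne); move: ne; rewrite -(inj_eq val_inj) => /eqP ne /=.
  by case: (s k < s i); case: (ltngtP i k) => H //; case: ne.
lia.
Qed.

Definition G n (s : 'S_n) : bool := tdepth s == inv s.

Lemma ord_split n (x : 'I_n.+1) : x = ord_max \/ exists k, x = wd k.
Proof.
case: (unliftP ord_max x) => [k ->|->]; last by left.
by right; exists k; rewrite wd_lift.
Qed.

Lemma ins_surj n (p : 'S_n.+1) : exists s x, p = ins s x.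
Proof.
have [g _ Kg] := ins_bij n.
by exists (g p).1, (g p).2; rewrite (Kg p).
Qed.

Lemma td_ins_max n (s : 'S_n) : tdepth (ins s ord_max) = tdepth s.
Proof. by rewrite /tdepth ncycles_ins_max subSS. Qed.

Lemma td_ins_wd n (s : 'S_n) k : tdepth (ins s (wd k)) = (tdepth s).+1.
Proof. rewrite /tdepth ncycles_ins_wd; have := ncycles_le s; lia. Qed.

Lemma td_le_inv n (s : 'S_n) : tdepth s <= inv s.
Proof.
elim: n s => [|n IH] s; first by rewrite /tdepth.
have [t [x ->]] := ins_surj s.
case: (ord_split x) => [->|[k ->]]; first by rewrite td_ins_max inv_ins_max.
rewrite td_ins_wd inv_ins_wd; have := IH t; lia.
Qed.

Lemma G_ins_max n (s : 'S_n) : G (ins s ord_max) = G s.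
Proof. by rewrite /G td_ins_max inv_ins_max. Qed.

Lemma G_ins_wd n (s : 'S_n) k : G (ins s (wd k)) = G s && (E s k == 0).
Proof.
rewrite /G td_ins_wd inv_ins_wd; have := td_le_inv s.
case: (E s k =P 0) => [->|/eqP]; rewrite ?andbT ?andbF; first by lia.
move=> H1 H2; apply/eqP; lia.
Qed.

Definition sv n (s : 'S_n) (i : nat) : nat :=
  if insub i is Some i' then nat_of_ord (s i') else 0.

Lemma svE n (s : 'S_n) (i : 'I_n) : sv s i = s i.
Proof. by rewrite /sv valK. Qed.

Lemma sv_lt n (s : 'S_n) i : i < n -> sv s i < n.
Proof. by move=> H; rewrite -[i]/(nat_of_ord (Ordinal H)) svE ltn_ord. Qed.

Definition tri (f : nat -> nat) m :=
  exists i j k, [/\ i < j, j < k, k < m, f k < f j & f j < f i].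

Lemma p321E (a : 'I_3) : (p321 a : nat) = 2 - a.
Proof. by rewrite /p321 permE /=; case: a => [[|[|[|]]]]. Qed.

Lemma contains_tri n (s : 'S_n) : contains s p321 -> tri (sv s) n.
Proof.
move/existsP => [f /forallP H].
pose o0 : 'I_3 := Ordinal (isT : 0 < 3).
pose o1 : 'I_3 := Ordinal (isT : 1 < 3).
pose o2 : 'I_3 := Ordinal (isT : 2 < 3).
have H01 := forallP (H o0) o1; have H12 := forallP (H o1) o2.
move: H01 H12; rewrite !p321E /= => /andP [h1 /eqP h2] /andP [h3 /eqP h4].
exists (f o0), (f o1), (f o2); rewrite !svE; split => //.
- have : f o1 != f o2 by rewrite neq_ltn h3.
  rewrite -(inj_eq (@perm_inj _ s)) -(inj_eq val_inj) /=; lia.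
- have : f o0 != f o1 by rewrite neq_ltn h1.
  rewrite -(inj_eq (@perm_inj _ s)) -(inj_eq val_inj) /=; lia.
Qed.

Lemma tri_contains n (s : 'S_n) : tri (sv s) n -> contains s p321.
Proof.
move=> [i [j [k [hij hjk hk]]]].
have hj : j < n by lia.
have hi : i < n by lia.
pose I := Ordinal hi; pose J := Ordinal hj; pose K := Ordinal hk.
rewrite -[i]/(val I) -[j]/(val J) -[k]/(val K) !svE => h1 h2.
apply/existsP.
exists [ffun a : 'I_3 => if val a == 0 then I else if val a == 1 then J else K].
apply/forallP => a; apply/forallP => b; rewrite !ffunE !p321E.
case: a => [[|[|[|a]]] Ha] //; case: b => [[|[|[|b]]] Hb] //=.
  all: try (apply/andP; split; first lia); apply/eqP; lia.
Qed.

Lemma sv_ins_max_lt n (s : 'S_n) i : i < n -> sv (ins s ord_max) i = sv s i.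
Proof.
move=> H; rewrite -[i]/(nat_of_ord (wd (Ordinal H))) svE ins_max_wd.
by rewrite -[X in _ = sv s X]/(nat_of_ord (Ordinal H)) svE.
Qed.

Lemma sv_ins_max_n n (s : 'S_n) : sv (ins s ord_max) n = n.
Proof. by rewrite -[n in sv _ n]/(nat_of_ord (@ord_max n)) svE ins_max_max. Qed.

Lemma sv_ins_wd_lt n (s : 'S_n) k i :
  i < n -> sv (ins s (wd k)) i = if i == k then n else sv s i.
Proof.
move=> H; rewrite -[i]/(nat_of_ord (wd (Ordinal H))) svE ins_wd_wd.
by rewrite -[X in _ = if _ then _ else sv s X]/(nat_of_ord (Ordinal H)) svE.
Qed.

Lemma sv_ins_wd_n n (s : 'S_n) k : sv (ins s (wd k)) n = sv s k.
Proof. by rewrite -[n in sv _ n]/(nat_of_ord (@ord_max n)) svE ins_wd_max svE. Qed.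

Lemma E0_rlm n (s : 'S_n) (k : 'I_n) :
  E s k == 0 -> forall j, k < j -> j < n -> sv s j < sv s k.
Proof.
rewrite /E sum_nat_eq0 => /forallP H j hkj hj.
have := H (Ordinal hj); rewrite -[j]/(nat_of_ord (Ordinal hj)) !svE /= hkj /= eqb0 -leqNgt.
have : Ordinal hj != k by rewrite -(inj_eq val_inj) /= neq_ltn hkj orbT.
rewrite -(inj_eq (@perm_inj _ s)) -(inj_eq val_inj) /=; lia.
Qed.

Lemma G_avoid n (s : 'S_n) : G s -> ~ tri (sv s) n.
Proof.
elim: n s => [|n IH] p; first by move=> _ [i [j [k [_ _ ]]]].
have [s [x ->]] := ins_surj p.
case: (ord_split x) => [->|[k0 ->]].
  rewrite G_ins_max => /IH Hs [i [j [k [hij hjk hk h1 h2]]]]; apply: Hs.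
  have hj : j < n by lia.
  have hi : i < n by lia.
  have := sv_lt s hj; rewrite !sv_ins_max_lt // in h2 *.
  case: (ltnP k n) => hkn.
    by move=> _; rewrite !sv_ins_max_lt // in h1; exists i, j, k; split.
  have ekn : k = n by lia.
  by rewrite ekn sv_ins_max_n sv_ins_max_lt in h1; lia.
rewrite G_ins_wd => /andP [/IH Hs /E0_rlm R] [i [j [k [hij hjk hk h1 h2]]]]; apply: Hs.
have hj : j < n by lia.
have hi : i < n by lia.
have bi := sv_lt s hi; have bj := sv_lt s hj; have bk0 := sv_lt s (ltn_ord k0).
rewrite (sv_ins_wd_lt s k0 hi) (sv_ins_wd_lt s k0 hj) in h2.
rewrite (sv_ins_wd_lt s k0 hj) in h1.
case: (ltnP k n) => hkn.
  have bk := sv_lt s hkn.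
  rewrite (sv_ins_wd_lt s k0 hkn) in h1.
  move: h1 h2; case: eqP => ek; case: eqP => ej; case: eqP => ei; move=> /= h1 h2; try lia.
    have := R j; rewrite -ei => /(_ hij hj) h3.
    by exists i, j, k; split; rewrite // -ei.
  by exists i, j, k; split.
have ekn : k = n by lia.
subst k; rewrite sv_ins_wd_n in h1.
move: h1 h2; case: eqP => ej; case: eqP => ei; move=> /= h1 h2; try lia.
  have h3 : k0 < j by rewrite -ei.
  by have := R j h3 hj; lia.
case: (ltngtP j k0) => hjk0.
- by exists i, j, k0; split.
- by have := R j hjk0 hj; lia.
- by case: ej.
Qed.

Lemma sum_lt_c n c : c <= n -> \sum_(j < n) (j < c) = c.
Proof.
elim: n => [|n IH] H; first by rewrite big_ord0; lia.
rewrite big_ord_recr /=; case: (ltnP n c) => h.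
  have -> : c = n.+1 by lia.
  rewrite (eq_bigr (fun _ => 1)); last by move=> j _; rewrite ltnS (ltnW (ltn_ord j)).
  by rewrite sum_nat_const card_ord muln1 addn1.
by rewrite IH // addn0.
Qed.

Lemma count_vals n (s : 'S_n) c : c <= n -> \sum_(j < n) (s j < c) = c.
Proof.
by move=> H; rewrite -{2}(sum_lt_c H) [RHS](reindex_inj (@perm_inj _ s)).
Qed.

Lemma sum_pos_ex n (b : 'I_n -> bool) : 0 < \sum_(j < n) (b j : nat) -> exists j, b j.
Proof.
move=> H; case: (pickP b) => [j bj|N]; first by exists j.
by move: H; rewrite big1 // => j _; rewrite N.
Qed.

Lemma avoid_disp n (s : 'S_n) : ~ tri (sv s) n -> disp s = 2 * inv s.
Proof.
move=> Hav.
pose l (i : 'I_n) := \sum_(j < n) ((j < i) && (s i < s j)).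
pose r (i : 'I_n) := \sum_(j < n) ((i < j) && (s j < s i)).
pose A (i : 'I_n) := \sum_(j < n) ((j < i) && (s j < s i)).
have Hr : inv s = \sum_i r i by rewrite invE.
have Hl : inv s = \sum_i l i by rewrite invE exchange_big.
have H1 i : (s i : nat) = A i + r i.
  rewrite -{1}(count_vals s (ltnW (ltn_ord (s i)))) /A /r -big_split.
  apply: eq_bigr => j _.
  case: (ltngtP j i) => h /=; rewrite ?addn0 //.
  by rewrite (val_inj h) ltnn.
have H2 (i : 'I_n) : (i : nat) = A i + l i.
  rewrite -{1}(sum_lt_c (ltnW (ltn_ord i))) /A /l -big_split.
  apply: eq_bigr => j _.
  case: (ltnP j i) => h //=.
  have : s j != s i by rewrite (inj_eq perm_inj) -(inj_eq val_inj) /= neq_ltn h.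
  rewrite -(inj_eq val_inj) /=; case: ltngtP => //.
have H3 (i : 'I_n) : l i = 0 \/ r i = 0.
  case: (posnP (l i)) => [|hl]; first by left.
  case: (posnP (r i)) => [|hr]; first by right.
  exfalso; have [j /andP [hj1 hj2]] := sum_pos_ex hl.
  have [k /andP [hk1 hk2]] := sum_pos_ex hr.
  apply: Hav; exists j, i, k; rewrite !svE; split => //.
rewrite /disp mul2n -addnn {1}Hl {1}Hr -big_split /=.
apply: eq_bigr => i _.
have := H1 i; have := H2 i; case: (H3 i) => ->; case: leqP; lia.
Qed.

Lemma E_pos n (s : 'S_n) (k j : 'I_n) : k < j -> s k < s j -> (E s k == 0) = false.
Proof.
move=> h1 h2; apply/negbTE; rewrite /E (bigD1 j) //= h1 h2 /=; lia.
Qed.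

Lemma E_max n (s : 'S_n.+1) : E s ord_max = 0.
Proof. by rewrite /E big1 // => j _; rewrite ltnNge -ltnS ltn_ord. Qed.

Lemma rl_count m (s : 'S_m.+1) : G s ->
  \sum_(k < m.+1) (E s k == 0) = 1 + (s ord_max != ord_max).
Proof.
have [t [x ->]] := ins_surj s.
rewrite big_ord_recr /= E_max eqxx addn1 add1n.
case: (ord_split x) => [->|[k0 ->]] Gs.
  rewrite ins_max_max eqxx /=; congr S.
  rewrite big1 // => k _; rewrite (@E_pos _ _ _ ord_max) //.
    exact: ltn_ord k.
  by rewrite ins_max_wd ins_max_max ltn_ord.
move: Gs; rewrite G_ins_wd => /andP [Gt /E0_rlm R].
have -> : (ins t (wd k0) ord_max != ord_max) = true.
  apply/eqP => E1; have := ins_wd_max t k0; rewrite E1 /= => E2.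
  by have := ltn_ord (t k0); rewrite -E2 ltnn.
congr S; rewrite (bigD1 k0) //= big1.
  suff -> : E (ins t (wd k0)) (wd k0) = 0 by [].
  rewrite /E big1 // => j _; rewrite ins_x /=.
  by have := leq_ord (ins t (wd k0) j); rewrite [m < _]ltnNge => ->; rewrite andbF.
move=> i ni; case: (ltngtP i k0) => h.
- rewrite (@E_pos _ _ _ (wd k0)) // ins_x ins_wd_wd (negbTE ni) /=; exact: ltn_ord.
- rewrite (@E_pos _ _ _ ord_max) //.
  + exact: (ltn_ord i).
  + rewrite ins_wd_wd (negbTE ni) ins_wd_max.
    by have := R i h (ltn_ord i); rewrite !svE.
- by move: ni; rewrite -(inj_eq val_inj) /= h eqxx.
Qed.

Definition Tc n := \sum_(s : 'S_n) (G s : nat).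
Definition Ac m := \sum_(s : 'S_m.+1) (G s && (s ord_max == ord_max) : nat).
Definition Bc m := \sum_(s : 'S_m.+1) (G s && (s ord_max != ord_max) : nat).

Lemma TAB m : Tc m.+1 = Ac m + Bc m.
Proof. by rewrite /Tc /Ac /Bc -big_split; apply: eq_bigr => s _; case: (G s); case: eqP. Qed.

Lemma ins_wd_max_neq n (s : 'S_n) k : (ins s (wd k) ord_max == ord_max) = false.
Proof.
apply/negbTE/eqP => E1; have := ins_wd_max s k; rewrite E1 /= => E2.
by have := ltn_ord (s k); rewrite -E2 ltnn.
Qed.

Lemma A_rec m : Ac m = Tc m.
Proof.
rewrite /Ac sum_ins; apply: eq_bigr => t _.
rewrite big_ord_recr /= big1 ?add0n; last first.
  by move=> k _; rewrite ins_wd_max_neq andbF.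
by rewrite G_ins_max ins_max_max eqxx andbT.
Qed.

Lemma B_rec m : Bc m = \sum_(t : 'S_m) (G t : nat) * \sum_(k < m) (E t k == 0 : nat).
Proof.
rewrite /Bc sum_ins; apply: eq_bigr => t _.
rewrite big_ord_recr /= ins_max_max eqxx andbF addn0 big_distrr /=.
apply: eq_bigr => k _; rewrite G_ins_wd ins_wd_max_neq andbT.
by case: (G t); case: (E t k == 0).
Qed.

Lemma T0 : Tc 0 = 1.
Proof.
rewrite /Tc (eq_bigr (fun _ => 1)); last first.
  by move=> s _; rewrite /G /tdepth invE big_ord0.
by rewrite sum_nat_const card_Sn.
Qed.

Lemma B0 : Bc 0 = 0.
Proof. by rewrite B_rec big1 // => t _; rewrite big_ord0 muln0. Qed.

Lemma BS m : Bc m.+1 = Tc m.+1 + Bc m.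
Proof.
rewrite B_rec /Tc /Bc -big_split; apply: eq_bigr => t _.
case Gt: (G t) => /=; last by rewrite mul0n.
by rewrite rl_count //; case: eqP.
Qed.

Lemma count_fib m : Tc m.+1 = fib (2 * m + 1) /\ Bc m = fib (2 * m).
Proof.
elim: m => [|m [IHT IHB]].
  by rewrite TAB A_rec T0 B0.
have eB : Bc m.+1 = fib (2 * m.+1).
  rewrite BS IHT IHB addn1.
  by have -> : 2 * m.+1 = (2 * m).+2 by lia.
split => //.
rewrite TAB A_rec eB IHT.
have -> : 2 * m.+1 + 1 = (2 * m).+3 by lia.
have -> : 2 * m.+1 = (2 * m).+2 by lia.
by rewrite addn1 addnC.
Qed.

Lemma card_G n : #|[set s : 'S_n | G s]| = Tc n.
Proof.
rewrite -sum1dep_card /Tc big_mkcond /=; apply: eq_bigr => s _.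
by case: (G s).
Qed.

Theorem theorem6p1 (n : nat) : (1 <= n)%N ->
  #|[set s : 'S_n | shallow s && avoids s p321]| = fib (2 * n - 1).
Proof.
case: n => // m _.
have -> : [set s : 'S_m.+1 | shallow s && avoids s p321] = [set s | G s].
  apply/setP => s; rewrite !inE /shallow /avoids.
  apply/idP/idP.
  - case/andP => /eqP Hsh Hav.
    have Hd : disp s = 2 * inv s.
      by apply: avoid_disp => /tri_contains; rewrite (negbTE Hav).
    rewrite /G; apply/eqP; lia.
  - move=> Gs; have Hav := G_avoid Gs.
    have Hd := avoid_disp Hav.
    apply/andP; split; first by rewrite Hd; move/eqP: Gs; lia.
    by apply/negP => /contains_tri.
rewrite card_G; have [-> _] := count_fib m.
by have -> : 2 * m.+1 - 1 = 2 * m + 1 by lia.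
Qed.
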